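(* Let $f,g\in\Lambda[t]$. Suppose there exists $n_0$ such that $f(c(2\lambda))=g(c(2\lambda))$ for all Young diagrams $\lambda$ with $|\lambda|\geq n_0$. Then $f=g$.
   Context: $\Lambda[t]$ is the algebra over ${\mathbb Q}[t]$ of symmetric functions in $x_1,x_2,\ldots$. The content of the box in row $x$ and column $y$ of a Young diagram is $y-x$, and $c(\lambda)$ is the multiset of contents of all boxes of $\lambda$. For a Young diagram $\lambda$ with $n$ boxes, $f(c(\lambda))$ is obtained by setting $t=n$, $x_i=0$ for $i>n$, and $\{x_1,\ldots,x_n\}=c(\lambda)$. $2\lambda$ is the Young diagram obtained by doubling every row length of $\lambda$, and $|\lambda|$ is the number of boxes of $\lambda$. *)

(* Defs.v *)
From HB Require Import structures.
From mathcomp Require Import all_boot all_order all_algebra.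
From mathcomp Require Import mpoly.
Set Implicit Arguments. Unset Strict Implicit. Unset Printing Implicit Defensive.
Import Order.TTheory GRing.Theory Num.Theory.
Local Open Scope ring_scope.

(* Lambda[t] as the graded inverse limit of symmetric polynomials:
   a family (f_n)_n with f_n a symmetric polynomial in x_1..x_n with
   coefficients in Q[t], compatible under x_{n+1} := 0, of bounded degree
   in the x-variables. *)
Definition kill_last (n : nat) (p : {mpoly {poly rat}[n.+1]}) : {mpoly {poly rat}[n]} :=
  p \mPo [tuple (match @insub nat (fun k => (k < n)%N) 'I_n (val i) with
              | Some j => 'X_j | None => 0 end : {mpoly {poly rat}[n]}) | i < n.+1].

Definition in_Lambda_t (f : forall n : nat, {mpoly {poly rat}[n]}) : Prop :=
  [/\ (forall n, f n \is symmetric),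
      (forall n, kill_last (f n.+1) = f n)
    & exists d : nat, forall n, (msize (f n) <= d)%N].

Definition is_young (la : seq nat) : bool := sorted geq la && all (fun r => 0 < r)%N la.
Definition nboxes (la : seq nat) : nat := sumn la.
Definition double_rows (la : seq nat) : seq nat := map (fun r => r.*2) la.

(* multiset of contents y - x (rows/columns 0-indexed here; differences agree) *)
Definition contents (la : seq nat) : seq int :=
  flatten [seq [seq (j%:Z - i%:Z)%R | j <- iota 0 (nth 0%N la i)] | i <- iota 0 (size la)].

(* f(c(la)): t := n, {x_1..x_n} := c(la), n = |la| *)
Definition eval_content (f : forall n : nat, {mpoly {poly rat}[n]}) (la : seq nat) : rat :=
  let n := nboxes la in
  ((f n).@[fun i : 'I_n => ((nth 0 (contents la) i)%:~R : rat)%:P]).[n%:R].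

(* Main.v *)
Require Import Defs.
From HB Require Import structures.
From mathcomp Require Import all_boot all_order all_algebra.
From mathcomp Require Import perm mpoly.
From mathcomp Require Import ring zify.
Set Implicit Arguments. Unset Strict Implicit. Unset Printing Implicit Defensive.
Import Order.TTheory GRing.Theory Num.Theory.
Local Open Scope ring_scope.

Section Gen.
Variables (n : nat) (R : nzRingType) (S T : nzRingType).

Lemma mmap_morph (f : R -> S) (h : 'I_n -> S) (phi : {rmorphism S -> T}) p :
  phi (mmap f h p) = mmap (phi \o f) (phi \o h) p.
Proof.
rewrite /mmap rmorph_sum; apply: eq_bigr => m _.
by rewrite rmorphM /mmap1 rmorph_prod /=; congr (_ * _); apply: eq_bigr => i _; rewrite rmorphXn.
Qed.

Lemma eq_mmap (f1 f2 : R -> S) (h1 h2 : 'I_n -> S) p :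
  f1 =1 f2 -> h1 =1 h2 -> mmap f1 h1 p = mmap f2 h2 p.
Proof.
move=> ef eh; rewrite /mmap; apply: eq_bigr => m _; rewrite ef /mmap1.
by congr (_ * _); apply: eq_bigr => i _; rewrite eh.
Qed.
End Gen.

Section Com.
Variables (n : nat) (R : comNzRingType).

Lemma meval_msym (s : 'S_n) (p : {mpoly R[n]}) v :
  (msym s p).@[v] = p.@[fun i => v (s i)].
Proof.
rewrite /msym /meval (mmap_morph _ _ (meval v)) /=.
apply: eq_mmap => [c|i] /=; by rewrite ?mevalC ?mevalXU.
Qed.

Lemma meval_muni (p : {mpoly R[n.+1]}) (v : 'I_n.+1 -> R) :
  p.@[v] = (map_poly (meval (fun i : 'I_n => v (widen_ord (leqnSn n) i))) (muni p)).[v ord_max].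
Proof.
rewrite /muni -horner_evalE.
rewrite (mmap_morph _ _ (map_poly (meval (fun i : 'I_n => v (widen_ord (leqnSn n) i))))).
rewrite (mmap_morph _ _ (horner_eval (v ord_max))).
rewrite /meval; apply: eq_mmap => [c|i] /=.
  by rewrite map_polyC /= horner_evalE hornerC /meval mmapC.
case: splitP => [j ej|j ej] /=.
  rewrite map_polyC horner_evalE hornerC /= mevalXU; congr (v _); apply: val_inj => /=; by move: ej => /= ->.
rewrite map_polyX horner_evalE hornerX; congr (v _); apply: val_inj => /=.
move: ej; rewrite /= => ->; by rewrite (ord1 j) addn0.
Qed.

Lemma muniK (p : {mpoly R[n.+1]}) :
  p = (map_poly (@mwiden n R) (muni p)).['X_ord_max].
Proof.
rewrite /muni -horner_evalE.
rewrite (mmap_morph _ _ (map_poly (@mwiden n R))).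
rewrite (mmap_morph _ _ (horner_eval 'X_ord_max)).
rewrite -[p in LHS]comp_mpoly_id /comp_mpoly; apply: eq_mmap => [c|i] /=.
  by rewrite map_polyC /= horner_evalE hornerC mwidenC.
rewrite tnth_mktuple.
case: splitP => [j ej|j ej] /=.
  rewrite map_polyC horner_evalE hornerC /= /mwiden mmapX mmap1U; congr 'X__; apply: val_inj => /=; by move: ej => /= ->.
rewrite map_polyX horner_evalE hornerX; congr 'X__; apply: val_inj => /=.
move: ej; rewrite /= => ->; by rewrite (ord1 j) addn0.
Qed.

Lemma muni_inj : injective (@muni n R).
Proof. by move=> p q e; rewrite (muniK p) (muniK q) e. Qed.

Lemma msize_muni_coef (p : {mpoly R[n.+1]}) k :
  (msize ((muni p)`_k) <= msize p - k)%N.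
Proof.
rewrite muniE coef_sum.
apply: leq_trans (mmeasure_sum _ _ _ _) _.
rewrite big_seq; elim/big_ind: _ => //= [x y hx hy|m mp]; first by rewrite geq_max hx hy.
rewrite coefZ coefXn.
case: eqP => [ek|_]; last by rewrite mulr0 mmeasure0.
rewrite mulr1.
apply: leq_trans (msizeZ_le _ _) _.
rewrite msizeX.
have := msize_mdeg_lt mp.
rewrite (mdegE m) big_ord_recr /= -ek.
set a := (\sum_(i < n) _)%N.
have -> : mdeg [multinom m (widen_ord (leqnSn n) i) | i < n] = a.
  by rewrite mdegE; apply: eq_bigr => i _; rewrite mnmE.
move=> h; rewrite leq_subRL ?addnS ?(addnC k) //.
by apply: leq_trans h; rewrite -addSn leq_addl.
Qed.
End Com.
Lemma roots_inf (F : idomainType) (p : {poly F}) :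
  injective (fun i : nat => i%:R : F) ->
  (forall N, exists L, (N <= L)%N /\ p.[L%:R] = 0) -> p = 0.
Proof.
move=> inj hinf; apply/eqP; apply/negPn/negP => p0.
have: forall k, exists rs : seq nat, [/\ size rs = k, uniq rs,
    all (fun i => p.[i%:R] == 0) rs & exists B, all (fun i => i < B)%N rs].
  elim=> [|k [rs [sz u ar [B aB]]]]; first by exists [::]; split => //; exists 0%N.
  have [L [BL rL]] := hinf B.
  exists (L :: rs); split => /=; first by rewrite sz.
  - rewrite u andbT; apply/negP => Lrs; move/allP: aB => /(_ _ Lrs).
    by rewrite ltnNge BL.
  - by rewrite rL eqxx.
  - exists L.+1; rewrite ltnSn /=; apply/allP => i /(allP aB) iB.
    by apply: (leq_trans iB); apply: (leq_trans BL).
move=> /(_ (size p)) [rs [sz u ar _]].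
have := max_poly_roots p0 (rs := map (fun i : nat => i%:R) rs).
rewrite size_map sz ltnn; move=> h; have //= : false; apply: h.
  by rewrite all_map; apply: sub_all ar => i /=.
by rewrite map_inj_uniq.
Qed.

Definition R := {poly rat}.

Lemma natR_inj : injective (fun i : nat => i%:R : R).
Proof.
move=> i j /= e; apply/eqP; rewrite -(eqr_nat rat).
by rewrite -(inj_eq (@polyC_inj _)) !polyC_natr e.
Qed.

Lemma natQ_inj : injective (fun i : nat => i%:R : rat).
Proof. by move=> i j /= /eqP; rewrite eqr_nat => /eqP. Qed.

Definition ext n (v : 'I_n -> nat) (z : nat) (i : 'I_n.+1) : nat :=
  if @insub nat (fun k => (k < n)%N) 'I_n (val i) is Some j then v j else z.

Lemma ext_widen n v z (i : 'I_n) : ext v z (widen_ord (leqnSn n) i) = v i.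
Proof.
rewrite /ext insubT /=; first by case: i.
by move=> h; congr (v _); apply: val_inj.
Qed.

Lemma ext_max n v z : @ext n v z ord_max = z.
Proof. by rewrite /ext insubF //= ltnn. Qed.

Lemma mpoly_zero_nat n (p : {mpoly R[n]}) :
  (forall v : 'I_n -> nat, p.@[fun i => (v i)%:R] = 0) -> p = 0.
Proof.
elim: n p => [|n IH] p hp.
  have pc : p = (p@_0%MM)%:MP.
    apply/mpolyP => m; rewrite mcoeffC.
    have -> : m = 0%MM by apply/mnmP => -[i hi]; exfalso; move: hi; rewrite ltn0.
    by rewrite eqxx mulr1.
  move: (hp (fun _ => 0%N)); rewrite pc mevalC => ->; by rewrite mpolyC0.
apply: muni_inj; rewrite muni0; apply/polyP => k; rewrite coef0.
apply: IH => v.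
set q := map_poly (meval (fun i : 'I_n => ((v i)%:R : R))) (muni p).
have q0 : q = 0.
  apply: roots_inf natR_inj _ => N; exists N; split => //.
  have := hp (ext v N); rewrite (meval_muni p) ext_max.
  have e : (fun i : 'I_n => ((ext v N (widen_ord (leqnSn n) i))%:R : R)) =1 (fun i => (v i)%:R).
    by move=> i; rewrite ext_widen.
  by rewrite (eq_map_poly (fun r => meval_eq r e)).
by have := congr1 (fun r : {poly R} => r`_k) q0; rewrite /q coef_map coef0.
Qed.
Section PF.
Variable T : comNzRingType.
Definition PF (g : nat -> T) := exists P : {poly T}, forall L, g L = P.[L%:R].

Lemma PF_ext g1 g2 : g1 =1 g2 -> PF g1 -> PF g2.
Proof. by move=> e [P hP]; exists P => L; rewrite -e. Qed.

Lemma PF_const c : PF (fun _ => c).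
Proof. by exists c%:P => L; rewrite hornerC. Qed.

Lemma PF_id : PF (fun L => L%:R).
Proof. by exists 'X => L; rewrite hornerX. Qed.

Lemma PF_pow k : PF (fun L => L%:R ^+ k).
Proof. by exists ('X ^+ k) => L; rewrite hornerXn. Qed.

Lemma PF_add g1 g2 : PF g1 -> PF g2 -> PF (fun L => g1 L + g2 L).
Proof. by move=> [P hP] [Q hQ]; exists (P + Q) => L; rewrite hornerD hP hQ. Qed.

Lemma PF_opp g : PF g -> PF (fun L => - g L).
Proof. by move=> [P hP]; exists (- P) => L; rewrite hornerN hP. Qed.

Lemma PF_mul g1 g2 : PF g1 -> PF g2 -> PF (fun L => g1 L * g2 L).
Proof. by move=> [P hP] [Q hQ]; exists (P * Q) => L; rewrite hornerM hP hQ. Qed.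

Lemma PF_sum B (F : nat -> nat -> T) :
  (forall k, (k < B)%N -> PF (F k)) -> PF (fun L => \sum_(k < B) F k L).
Proof.
elim: B => [|B IH] h.
  by apply: (PF_ext _ (PF_const 0)) => L; rewrite big_ord0.
apply: (PF_ext _ (PF_add (IH _) (h B _))) => //.
- by move=> L; rewrite big_ord_recr.
- by move=> k kB; apply: h; apply: ltnW.
Qed.
End PF.

Lemma faulhaber j : PF (fun L => \sum_(i < L) (i%:R : rat) ^+ j).
Proof.
elim/ltn_ind: j => j IH.
set S := fun q L => \sum_(i < L) (i%:R : rat) ^+ q.
have key : forall L, (L%:R : rat) ^+ j.+1 = \sum_(q < j.+1) S q L *+ 'C(j.+1, q).
  move=> L.
  have -> : (L%:R : rat) ^+ j.+1 = \sum_(0 <= i < L) ((i.+1)%:R ^+ j.+1 - i%:R ^+ j.+1).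
    by rewrite telescope_sumr // expr0n /= subr0.
  rewrite big_mkord.
  rewrite (eq_bigr (fun i : 'I_L => \sum_(q < j.+1) (i%:R : rat) ^+ q *+ 'C(j.+1, q))); last first.
    move=> i _; rewrite -addn1 natrD (addrC (i%:R)) exprDn big_ord_recr /= subnn expr0 mul1r binn mulr1n addrK.
    by apply: eq_bigr => q _; rewrite expr1n mul1r.
  rewrite exchange_big /=; apply: eq_bigr => q _.
  by rewrite /S sumrMnl.
have hS : forall L, S j L = (j.+1%:R)^-1 * ((L%:R : rat) ^+ j.+1 - \sum_(q < j) S q L *+ 'C(j.+1, q)).
  move=> L; rewrite key big_ord_recr /= addrC addrK binSn -[S j L *+ _]mulr_natr.
  by rewrite [S j L * _]mulrC mulKf // pnatr_eq0.
apply: (@PF_ext _ (fun L => (j.+1%:R)^-1 * ((L%:R : rat) ^+ j.+1 - \sum_(q < j) S q L *+ 'C(j.+1, q)))).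
  by move=> L; exact: (esym (hS L)).
apply: (PF_mul (PF_const _)).
apply: (PF_add (PF_pow _ _)).
apply: PF_opp.
apply: (PF_sum (F := fun q L => S q L *+ 'C(j.+1, q))) => q qj.
have [P hP] := IH q qj.
by exists (P *+ 'C(j.+1, q)) => L; rewrite hornerMn /S hP.
Qed.


Lemma faulhaberR j : PF (fun L => \sum_(i < L) (i%:R : R) ^+ j).
Proof.
have [P hP] := faulhaber j.
exists (map_poly polyC P) => L.
rewrite -polyC_natr horner_map /= -hP.
rewrite rmorph_sum; apply: eq_bigr => i _ /=.
by rewrite rmorphXn /= polyC_natr.
Qed.

Lemma PF_antider (g : nat -> R) : PF g -> PF (fun L => \sum_(i < L) g i).
Proof.
move=> [P hP].
apply: (@PF_ext _ (fun L => \sum_(k < size P) P`_k * \sum_(i < L) (i%:R : R) ^+ k)).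
  move=> L; rewrite (eq_bigr (fun k : 'I_(size P) => \sum_(i < L) P`_k * (i%:R : R) ^+ k)); last first.
    by move=> k _; rewrite mulr_sumr.
  by rewrite exchange_big /=; apply: eq_bigr => i _; rewrite hP horner_coef.
apply: (PF_sum (F := fun k L => P`_k * \sum_(i < L) (i%:R : R) ^+ k)) => k _.
exact: (PF_mul (PF_const _) (faulhaberR k)).
Qed.

Definition fam := forall n, {mpoly R[n]}.
Definition Hv (h : fam) (s : seq rat) : R := (h (size s)).@[fun i => (nth 0 s i)%:P].

Lemma HvE (h : fam) s n (e : size s = n) :
  Hv h s = (h n).@[fun i : 'I_n => (nth 0 s i)%:P].
Proof. by case: n / e. Qed.

Definition Fam (h : fam) (D : nat) :=
  [/\ (forall s s', perm_eq s s' -> Hv h s = Hv h s'),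
      (forall s, Hv h (rcons s 0) = Hv h s)
    & forall n, (msize (h n) <= D)%N].

Lemma Fam_mono h D1 D2 : (D1 <= D2)%N -> Fam h D1 -> Fam h D2.
Proof. by move=> le [h1 h2 h3]; split => // n; apply: leq_trans (h3 n) le. Qed.

Definition der (h : fam) k : fam := fun n => (muni (h n.+1))`_k.

Definition Pi (h : fam) (s : seq rat) : {poly R} :=
  map_poly (meval (fun i : 'I_(size s) => (nth 0 s i)%:P)) (muni (h (size s).+1)).

Lemma PiE h s z : (Pi h s).[z%:P] = Hv h (rcons s z).
Proof.
rewrite (HvE h (size_rcons s z)) (meval_muni (h (size s).+1)) /Pi /=.
rewrite nth_rcons ltnn eqxx; congr (_.[_]).
apply: eq_map_poly => r; apply: meval_eq => i /=.
by rewrite nth_rcons ltn_ord.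
Qed.

Lemma Pi_coef h s k : (Pi h s)`_k = Hv (der h k) s.
Proof. by rewrite /Pi coef_map. Qed.

Lemma PolyEqR (p q : {poly R}) : (forall z : nat, p.[z%:R] = q.[z%:R]) -> p = q.
Proof.
move=> e; apply/eqP; rewrite -subr_eq0; apply/eqP.
apply: roots_inf natR_inj _ => N; exists N; split => //.
by rewrite hornerD hornerN e subrr.
Qed.

Lemma Pi_eq h s s' : (forall z, Hv h (rcons s z) = Hv h (rcons s' z)) -> Pi h s = Pi h s'.
Proof.
move=> e; apply: PolyEqR => z; rewrite -polyC_natr !PiE; exact: e.
Qed.

Lemma Fam_der h D k : Fam h D -> Fam (der h k) (D - k).
Proof.
move=> [h1 h2 h3]; split.
- move=> s s' ss'; rewrite -!Pi_coef.
  have -> : Pi h s = Pi h s' by apply: Pi_eq => z; apply: h1; rewrite -!cats1 perm_cat2r.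
  by [].
- move=> s; rewrite -!Pi_coef.
  have -> : Pi h (rcons s 0) = Pi h s.
    apply: Pi_eq => z; rewrite -[Hv h (rcons s z)]h2; apply: h1; rewrite -!cats1 -!catA perm_cat2l.
    by rewrite perm_catC.
  by [].
- move=> n; apply: leq_trans (msize_muni_coef _ _) _.
  by apply: leq_sub2r.
Qed.

Lemma Hv_der0 h D s : Fam h D -> Hv (der h 0) s = Hv h s.
Proof.
by move=> [_ h2 _]; rewrite -Pi_coef -horner_coef0 -polyC0 PiE h2.
Qed.

Lemma Hv_expand h B s z : Fam h B ->
  Hv h (rcons s z) = \sum_(k < B) Hv (der h k) s * z%:P ^+ k.
Proof.
move=> hB; rewrite -PiE (horner_coef_wide _ (n := B)); last first.
  apply/leq_sizeP => j Bj; rewrite Pi_coef /Hv.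
  have [_ _ h3] := Fam_der j hB.
  have /eqP -> : der h j (size s) == 0.
    by rewrite -msize_poly_eq0 -leqn0; apply: leq_trans (h3 _) _; rewrite leqn0 subn_eq0.
  by rewrite meval0.
by apply: eq_bigr => k _; rewrite Pi_coef.
Qed.

Definition u (a c : rat) L : seq rat := [seq a + c * i%:R | i <- iota 0 L].

Lemma u_S a c L : u a c L.+1 = rcons (u a c L) (a + c * L%:R).
Proof. by rewrite /u -addn1 iotaD map_cat cats1. Qed.

Lemma size_u a c L : size (u a c L) = L.
Proof. by rewrite size_map size_iota. Qed.

Lemma PF_lin (a c : rat) k : PF (fun L => ((a + c * L%:R)%:P : R) ^+ k).
Proof.
exists (((a%:P)%:P + (c%:P)%:P * 'X) ^+ k) => L.
by rewrite horner_exp hornerD hornerC hornerM hornerC hornerX polyCD polyCM polyC_natr.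
Qed.

Lemma PL D : forall h, Fam h D -> forall S a c, PF (fun L => Hv h (S ++ u a c L)).
Proof.
elim: D => [|D IH] h hD S a c.
  have [_ _ h3] := hD.
  exists 0 => L; rewrite horner0 /Hv.
  have /eqP -> : h (size (S ++ u a c L)) == 0 by rewrite -msize_poly_eq0 -leqn0.
  by rewrite meval0.
set g := fun L => Hv h (S ++ u a c L).
set Dl := fun L => \sum_(k < D) Hv (der h k.+1) (S ++ u a c L) * ((a + c * L%:R)%:P : R) ^+ k.+1.
have gS : forall L, g L.+1 = g L + Dl L.
  move=> L; rewrite /g u_S -rcons_cat (Hv_expand _ _ hD) big_ord_recl /=.
  rewrite (Hv_der0 _ hD) expr0 mulr1 /Dl; congr (_ + _); apply: eq_bigr => i _.
have gE : forall L, g L = g 0%N + \sum_(i < L) Dl i.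
  elim=> [|L IHL]; first by rewrite big_ord0 addr0.
  rewrite gS IHL big_ord_recr /= addrA; reflexivity.
apply: (@PF_ext _ (fun L => g 0%N + \sum_(i < L) Dl i)); first by move=> L; exact: (esym (gE L)).
apply: (PF_add (PF_const _)); apply: PF_antider.
apply: (PF_sum (F := fun k L => Hv (der h k.+1) (S ++ u a c L) * ((a + c * L%:R)%:P : R) ^+ k.+1)) => k kD.
apply: PF_mul (PF_lin _ _ _).
apply: IH; apply: (Fam_mono _ (Fam_der k.+1 hD)).
by rewrite subSS leq_subr.
Qed.

Definition E (h : fam) (s : seq rat) : rat := (Hv h s).[(size s)%:R].

Lemma PFE h D S a c : Fam h D -> PF (fun L => E h (S ++ u a c L)).
Proof.
move=> hD; have [P hP] := PL hD S a c.
exists (\sum_(k < size P) (P`_k \Po ('X + ((size S)%:R)%:P)) * 'X ^+ k) => L.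
rewrite /E hP size_cat size_u (horner_coef P) !horner_sum; apply: eq_bigr => k _.
rewrite !hornerM horner_comp hornerD hornerX hornerC -polyC_natr -rmorphXn hornerC.
by rewrite hornerXn natrD addrC.
Qed.

Lemma LR (G : nat -> rat) : PF G -> (forall N, exists L, (N <= L)%N /\ G L = 0) ->
  forall L, G L = 0.
Proof.
move=> [P hP] hinf L; rewrite hP.
have -> : P = 0; last by rewrite horner0.
apply: roots_inf natQ_inj _ => N; have [L' [NL' GL']] := hinf N.
by exists L'; rewrite -hP.
Qed.

Lemma E_perm h D s s' : Fam h D -> perm_eq s s' -> E h s = E h s'.
Proof. by move=> [h1 _ _] ss'; rewrite /E (h1 _ _ ss') (perm_size ss'). Qed.

Lemma line h D S a c : Fam h D ->
  (forall N, exists L, (N <= L)%N /\ E h (S ++ u a c L) = 0) ->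
  forall L, E h (S ++ u a c L) = 0.
Proof. move=> hD; exact: (LR (PFE S a c hD)). Qed.
Definition row (i len : nat) : seq int := [seq (j%:Z - i%:Z)%R | j <- iota 0 len].

Lemma contentsE la : contents la = flatten [seq row i (nth 0%N la i) | i <- iota 0 (size la)].
Proof. by []. Qed.

Lemma contents_mid pre x post :
  contents (pre ++ x :: post) =
  flatten [seq row i (nth 0%N pre i) | i <- iota 0 (size pre)] ++ row (size pre) x ++
  flatten [seq row i (nth 0%N post (i - (size pre).+1)) | i <- iota (size pre).+1 (size post)].
Proof.
rewrite contentsE size_cat /= iotaD map_cat flatten_cat add0n /=.
congr (_ ++ _ ++ _).
- congr flatten; apply/eq_in_map => i; rewrite mem_iota add0n => /andP[_ ilt].
  by rewrite nth_cat ilt.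
- by rewrite nth_cat ltnn subnn.
- congr flatten; apply/eq_in_map => i; rewrite mem_iota => /andP[ilt _].
  rewrite nth_cat ltnNge ltnW //=.
  have -> : (i - size pre = (i - (size pre).+1).+1)%N by rewrite subnS prednK // subn_gt0.
  by [].
Qed.

Lemma contents_tail0 l z : contents (l ++ nseq z 0%N) = contents l.
Proof.
rewrite !contentsE size_cat size_nseq iotaD map_cat flatten_cat add0n.
have -> : [seq row i (nth 0%N (l ++ nseq z 0%N) i) | i <- iota (size l) z] = [seq [::] | i <- iota (size l) z].
  apply/eq_in_map => i; rewrite mem_iota => /andP[li _]; rewrite nth_cat ltnNge li /= nth_nseq.
  by case: ifP.
have -> : flatten [seq [::] | i <- iota (size l) z] = [::] :> seq int by elim: (iota _ _).
rewrite cats0; congr flatten; apply/eq_in_map => i; rewrite mem_iota add0n => /andP[_ ilt].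
by rewrite nth_cat ilt.
Qed.

Lemma size_contents la : size (contents la) = sumn la.
Proof.
rewrite contentsE size_flatten /shape -map_comp.
rewrite (eq_map (g := nth 0%N la)); last by move=> i /=; rewrite size_map size_iota.
by rewrite -/(mkseq _ _) mkseq_nth.
Qed.

Definition cq la : seq rat := [seq (z%:~R : rat) | z <- contents la].

Lemma row_u k x : [seq (z%:~R : rat) | z <- row k x] = u (- (k%:R)) 1 x.
Proof.
rewrite /row /u -map_comp; apply: eq_map => j /=.
by rewrite rmorphB /= !pmulrn mul1r addrC.
Qed.

Lemma cq_mid pre x post :
  perm_eq (cq (pre ++ x :: post)) (cq (pre ++ 0%N :: post) ++ u (- ((size pre)%:R)) 1 x).
Proof.
rewrite /cq !contents_mid -row_u /= !map_cat -catA perm_cat2l.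
by rewrite perm_catC.
Qed.

Lemma u_rev a L : perm_eq (u a 1 L) (u (a + L%:R - 1) (-1) L).
Proof.
elim: L a => [|L IH] a //=.
rewrite u_S.
have -> : u (a + L.+1%:R - 1) (-1) L.+1 = (a + L%:R) :: u (a + L%:R - 1) (-1) L.
  rewrite /u /= mulr0 addr0 -[iota 1 L]/(iota (1 + 0) L) iotaDl -map_comp /=.
  congr (_ :: _); first by rewrite -natr1; ring.
  by apply: eq_map => i /=; rewrite -natr1 natrD; ring.
rewrite perm_rcons mul1r perm_cons.
exact: IH.
Qed.

Section Comb.
Variables (h : fam) (D n0 : nat).
Hypothesis hD : Fam h D.
Hypothesis hyp : forall la, is_young la -> (n0 <= sumn la)%N -> E h (cq (double_rows la)) = 0.

Lemma young_cons m mu : is_young mu -> (0 < m)%N -> (head 0%N mu <= m)%N -> is_young (m :: mu).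
Proof.
rewrite /is_young => /andP[s a] m0 hm /=; rewrite m0 a andbT.
by case: mu s hm {a} => //= y mu s hm; rewrite andbT; apply/andP.
Qed.

Lemma claim k : forall pre mu, size pre = k -> is_young mu -> (k = 0%N -> (n0 <= sumn mu)%N) ->
  E h (cq (pre ++ double_rows mu)) = 0.
Proof.
elim: k => [|k IH] pre mu sz ymu hn.
  by move/eqP: sz; rewrite size_eq0 => /eqP ->; apply: hyp => //; apply: hn.
case/lastP: pre sz => [//|pre x] sz.
rewrite size_rcons in sz; case: sz => sz.
rewrite cat_rcons (E_perm hD (cq_mid _ _ _)).
have := @line h D (cq (pre ++ 0%N :: double_rows mu)) (- (size pre)%:R) 1 hD.
move=> /(_ _ x) <-; first by [].
move=> N.
set m := maxn (maxn N 1) (maxn n0 (head 0%N mu)).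
exists m.*2; split.
  rewrite /m; lia.
rewrite -(E_perm hD (cq_mid _ _ _)).
have -> : pre ++ m.*2 :: double_rows mu = pre ++ double_rows (m :: mu) by [].
apply: IH => //.
- apply: young_cons => //; rewrite /m; lia.
- move=> _ /=; rewrite /m; lia.
Qed.

Lemma fact0 l : l != [::] -> E h (cq l) = 0.
Proof.
move=> l0; have := @claim (size l) l [::] erefl.
rewrite cats0; apply => //; move/eqP; rewrite size_eq0; by move/negPf: l0 => ->.
Qed.

Definition ivs (X : seq (int * nat)) : seq rat := flatten [seq u (x.1%:~R) 1 x.2 | x <- X].

Lemma Q X : forall l, l != [::] -> E h (cq l ++ ivs X) = 0.
Proof.
elim: X => [|[b L0] X IH] l l0.
  by rewrite /ivs /= cats0; apply: fact0.
rewrite /ivs /= -/(ivs X).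
pose cint := (b + L0%:Z)%R.
pose c : rat := cint%:~R.
set S := cq l ++ ivs X.
have key : forall L', E h (S ++ u (c - 1) (-1) L') = 0.
  apply: (line hD) => N.
  pose L' := (size l + `|cint| + N)%N.
  exists L'; split; first by rewrite /L'; lia.
  pose rn := `|(L'%:Z - cint)%R|%N.
  have hr : rn%:Z = (L'%:Z - cint)%R by rewrite /rn /L'; lia.
  have rl : (size l <= rn)%N by rewrite /rn /L'; lia.
  pose z := (rn - size l)%N.
  pose l' := (l ++ nseq z 0%N) ++ [:: L'].
  have l'0 : l' != [::] by rewrite /l'; case: (l ++ _).
  rewrite -(IH l' l'0); apply: (E_perm hD).
  have e1 : perm_eq (cq l') (cq l ++ u (c - L'%:R) 1 L').
    apply: (perm_trans (cq_mid _ _ _)).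
    rewrite -catA -[[:: 0%N]]/(nseq 1 0%N) -nseqD /cq contents_tail0 -/(cq l).
    rewrite size_cat size_nseq subnKC //.
    have -> : - (rn%:R : rat) = c - L'%:R.
      move/(congr1 (fun x : int => (x%:~R : rat))): hr; rewrite /= rmorphB /= !pmulrn => ->; rewrite -/c; ring.
    by [].
  rewrite perm_sym; apply: (perm_trans (perm_cat e1 (perm_refl (ivs X)))).
  rewrite /S -!catA perm_cat2l perm_catC perm_cat2l.
  apply: (perm_trans (u_rev _ _)).
  have -> : c - L'%:R + L'%:R - 1 = c - 1 by ring.
  by [].
rewrite -(key L0) catA; apply: (E_perm hD).
rewrite /S -!catA perm_cat2l perm_catC perm_cat2l.
apply: (perm_trans (u_rev _ _)).
have -> : b%:~R + L0%:R - 1 = c - 1 by rewrite /c /cint rmorphD /= pmulrn.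
by [].
Qed.

Lemma Hv_zeros s k : Hv h (s ++ nseq k 0) = Hv h s.
Proof.
have [h1 h2 _] := hD.
elim: k => [|k IH]; first by rewrite cats0.
rewrite -IH -[Hv h (s ++ nseq k 0)]h2; apply: h1.
by rewrite -cats1 -catA perm_cat2l /= -cat1s perm_catC.
Qed.

Lemma Hv_nat_zero N : Hv h [seq (n%:R : rat) | n <- N] = 0.
Proof.
set s := [seq (n%:R : rat) | n <- N].
have hk : forall k, E h (s ++ nseq k 0) = 0.
  move=> k.
  have := @Q [seq (n%:Z, 1%N) | n <- N ++ nseq k 0%N] [:: 0%N] erefl.
  have -> : cq [:: 0%N] = [::] by [].
  have -> : ivs [seq (n%:Z, 1%N) | n <- N ++ nseq k 0%N] = s ++ nseq k 0.
    rewrite /s -[nseq k (0 : rat)]/(nseq k (0%N%:R)) -map_nseq -map_cat.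
    elim: (N ++ _) => //= n t; rewrite /ivs /= => ->.
    by rewrite /u /= mulr0 addr0 pmulrn.
  by [].
apply: (roots_inf natQ_inj) => M; exists (size s + M)%N; split; first exact: leq_addl.
by have := hk M; rewrite /E Hv_zeros size_cat size_nseq.
Qed.

Lemma h_zero n : h n = 0.
Proof.
apply: mpoly_zero_nat => v.
have := Hv_nat_zero [seq v i | i <- enum 'I_n].
have sz : size [seq (n0%:R : rat) | n0 <- [seq v i | i <- enum 'I_n]] = n.
  by rewrite !size_map -enumT size_enum_ord.
rewrite (HvE h sz) => <-; apply: meval_eq => i.
by rewrite -map_comp (nth_map i) ?size_enum_ord // nth_ord_enum polyC_natr.
Qed.
End Comb.

Lemma Fam_Lambda (f : fam) : in_Lambda_t f -> exists D, Fam f D.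
Proof.
move=> [hs hk [D hD]]; exists D; split => //.
- move=> s s' ss'.
  have e : size s' = size s by rewrite (perm_size ss').
  rewrite (HvE f e).
  have := ss'; rewrite perm_sym => ss.
  have /tuple_permP [sg ->] : perm_eq s' (in_tuple s) by [].
  rewrite /Hv -[f (size s) in LHS](issymP _ (hs (size s)) sg) meval_msym.
  apply: meval_eq => i /=.
  by rewrite (nth_map i) ?size_enum_ord // nth_ord_enum (tnth_nth 0).
- move=> s; rewrite (HvE f (size_rcons s 0)) /Hv -[in RHS]hk /kill_last comp_mpoly_meval.
  apply: meval_eq => i; rewrite tnth_mktuple.
  case: insubP => [j lt ej|nlt] /=.
    by rewrite mevalXU nth_rcons ej lt.
  rewrite meval0 nth_rcons (negPf nlt).
  have -> : val i == size s by rewrite eqn_leq -ltnS ltn_ord leqNgt nlt.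
  by rewrite polyC0.
Qed.

Lemma Hv_sub (f g : fam) s : Hv (fun n => f n - g n) s = Hv f s - Hv g s.
Proof. by rewrite /Hv mevalB. Qed.

Theorem corollary4p3 (f g : forall n : nat, {mpoly {poly rat}[n]}) :
  in_Lambda_t f -> in_Lambda_t g ->
  (exists n0 : nat, forall la : seq nat, is_young la -> (n0 <= nboxes la)%N ->
     eval_content f (double_rows la) = eval_content g (double_rows la)) ->
  forall n, f n = g n.
Proof.
move=> /Fam_Lambda [Df [f1 f2 f3]] /Fam_Lambda [Dg [g1 g2 g3]] [n0 hyp] n.
pose h : fam := fun n => f n - g n.
have hD : Fam h (maxn Df Dg).
  split.
  - by move=> s s' ss'; rewrite !Hv_sub (f1 _ _ ss') (g1 _ _ ss').
  - by move=> s; rewrite !Hv_sub f2 g2.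
  - move=> k; apply: leq_trans (msizeD_le _ _) _; rewrite msizeN geq_max.
    by rewrite (leq_trans (f3 k)) ?leq_maxl // (leq_trans (g3 k)) ?leq_maxr.
have hz := @h_zero h (maxn Df Dg) n0 hD.
apply/eqP; rewrite -subr_eq0; apply/eqP; apply: hz => la yla hla.
have e : size (cq (double_rows la)) = nboxes (double_rows la) by rewrite size_map size_contents.
rewrite /E (HvE h e) e /h mevalB hornerD hornerN.
have ev : forall p : fam, ((p (nboxes (double_rows la))).@[fun i => ((cq (double_rows la))`_i)%:P]).[(nboxes (double_rows la))%:R] = eval_content p (double_rows la).
  move=> p; rewrite /eval_content; congr (_.[_]); apply: meval_eq => i.
  by rewrite (nth_map 0) // size_contents; exact: ltn_ord.
by rewrite !ev hyp // subrr.
Qed.
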